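(* Let $q\ge5$ be a prime power and let $\mathcal{C}_\mathscr{C}$ be the $[q+1,q-3,5]_q$ code with parity check matrix whose columns are the vectors $(1,t,t^2,t^3)$, $t\in\mathbb{F}_q$, and $(0,0,0,1)$. All weight-$1$ cosets $\mathcal{V}^{(1)}$ of $\mathcal{C}_\mathscr{C}$ have the same weight distribution, namely $B_0(\mathcal{V}^{(1)})=B_2(\mathcal{V}^{(1)})=B_3(\mathcal{V}^{(1)})=0$, $B_1(\mathcal{V}^{(1)})=1$, $B_4(\mathcal{V}^{(1)})=\binom{q}{4}$, and for $w\ge5$ $$B_w(\mathcal{V}^{(1)})=A_w(\mathcal{C}_\mathscr{C})+(-1)^{w}\left(\binom{q+1}{w}\binom{w-1}{3}-\binom{q}{w-1}\binom{w-2}{2}\right).$$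
   Context: A coset of a linear code $\mathcal{C}\subseteq\mathbb{F}_q^n$ is a set $\mathbf{v}+\mathcal{C}$; its weight is the minimum Hamming weight of its vectors. $B_w(\mathcal{V})$ is the number of vectors of Hamming weight $w$ in the coset $\mathcal{V}$, and $A_w(\mathcal{C}_\mathscr{C})$ is the number of codewords of Hamming weight $w$ in $\mathcal{C}_\mathscr{C}$. *)

(* Defs.v *)
From HB Require Import structures.
From mathcomp Require Import all_boot all_order all_algebra all_field.
Set Implicit Arguments. Unset Strict Implicit. Unset Printing Implicit Defensive.
Import GRing.Theory.
Local Open Scope ring_scope.

(* Coordinates of F_q^(q+1) are indexed by [option F]:
   [Some t] <-> column (1,t,t^2,t^3), [None] <-> column (0,0,0,1). *)
Definition word (F : finFieldType) := {ffun option F -> F}.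

Definition pcol (F : finFieldType) (i : option F) (k : 'I_4) : F :=
  match i with
  | Some t => t ^+ k
  | None => ((k : nat) == 3%N)%:R
  end.

Definition hwt (F : finFieldType) (v : word F) : nat := #|[set i | v i != 0]|.

Definition codeC (F : finFieldType) : {set word F} :=
  [set c : word F | [forall k : 'I_4, \sum_(i : option F) pcol i k * c i == 0]].

Definition coset (F : finFieldType) (v : word F) : {set word F} :=
  [set u : word F | u - v \in codeC F].

(* Weight of a (nonempty) set of vectors = minimum Hamming weight of its
   elements; the seed q+1 = #|option F| is an upper bound of all weights,
   so it does not affect the minimum for nonempty sets such as cosets. *)
Definition set_weight (F : finFieldType) (V : {set word F}) : nat :=
  \big[minn/#|{: option F}|]_(u in V) hwt u.

Definition Bw (F : finFieldType) (V : {set word F}) (w : nat) : nat :=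
  #|[set u in V | hwt u == w]|.
Definition Aw (F : finFieldType) (w : nat) : nat := Bw (codeC F) w.

(* Main.v *)
From HB Require Import structures.
Require Import Defs.
From mathcomp Require Import all_boot all_order all_algebra all_field.
From mathcomp Require Import zify ring.
Import GRing.Theory.
Local Open Scope ring_scope.
Set Implicit Arguments. Unset Strict Implicit. Unset Printing Implicit Defensive.

Section Mobius.
Variable T : finType.

Lemma alt n (R S : {set T}) : (#|S| - #|R|)%N = n -> R \subset S ->
  \sum_(X : {set T} | (X \subset S) && (R \subset X)) (-1)^+(#|S| - #|X|)
    = (R == S)%:R :> int.
Proof.
elim: n R S => [|n IH] R S hn hRS.
  have eRS : R = S by apply/eqP; rewrite eqEcard hRS /= -subn_eq0 hn.
  subst R; rewrite eqxx (eq_bigl (fun X : {set T} => X == S)) ?big_pred1_eq ?subnn ?expr0 //.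
  by move=> X; rewrite eqEsubset.
have hne : R != S by apply: contra_eqN hn => /eqP ->; rewrite subnn.
have [x hx] : exists x, x \in S :\: R.
  by apply/set0Pn; rewrite -card_gt0 cardsD (setIidPr hRS) hn.
move: hx; rewrite inE => /andP[hxR hxS].
rewrite (bigID (fun X : {set T} => x \in X)) /=.
rewrite (eq_bigl (fun X : {set T} => (X \subset S) && (x |: R \subset X))); last first.
  move=> X; rewrite subUset sub1set.
  by case: (X \subset S); case: (x \in X); case: (R \subset X).
rewrite IH; last by rewrite subUset sub1set hxS hRS.
  2: by rewrite cardsU1 hxR /= add1n subnS hn.
rewrite (eq_bigl (fun X : {set T} => (X \subset S :\ x) && (R \subset X))); last first.
  move=> X; rewrite subsetD1.
  by case: (X \subset S); case: (x \in X); case: (R \subset X).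
have hS : #|S| = (#|S :\ x|).+1 by rewrite (cardsD1 x S) hxS.
rewrite (eq_bigr (fun X : {set T} => - (-1)^+(#|S :\ x| - #|X|))); last first.
  move=> X /andP[hX _]; rewrite hS subSn ?exprS ?mulN1r //.
  exact: subset_leq_card.
have h1 : (#|S :\ x| - #|R|)%N = n.
  by move: hn; rewrite hS subSn ?subset_leq_card ?subsetD1 ?hRS ?hxR // => -[].
rewrite sumrN (IH _ _ h1); last by rewrite subsetD1 hRS hxR.
have -> : (x |: R == S) = (R == S :\ x).
  apply/eqP/eqP => [<-|->]; first by rewrite setU1K.
  by rewrite setD1K.
by rewrite subrr (negPf hne).
Qed.

Lemma mobius (f : {set T} -> int) (S : {set T}) :
  \sum_(X : {set T} | X \subset S) (-1)^+(#|S| - #|X|) * \sum_(R : {set T} | R \subset X) f R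
   = f S.
Proof.
under eq_bigr => X _ do rewrite big_distrr.
rewrite (exchange_big_dep (fun R : {set T} => R \subset S)) /=; last first.
  by move=> X R hX hR; exact: subset_trans hR hX.
rewrite (bigD1 S) //= [X in _ + X]big1 ?addr0.
  by rewrite -mulr_suml (alt (erefl _)) // eqxx mul1r.
move=> R /andP[hR hne].
by rewrite -mulr_suml (alt (erefl _)) // (negPf hne) mul0r.
Qed.
End Mobius.
Definition sigma (m : nat) : int := \sum_(t < 4) (-1)^+t *+ 'C(m, t).

Lemma sigmaS m : sigma m.+1 = - ('C(m, 3))%:R.
Proof.
rewrite /sigma !big_ord_recr big_ord0 /= !binS !bin0 !mulrnDr; simpl.
rewrite !expr0 !expr1 !exprS !expr0; ring.
Qed.

Lemma sgn_sub (a b : nat) : (b <= a)%N -> (-1)^+(a - b) = (-1)^+a * (-1)^+b :> int.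
Proof.
move=> hba; rewrite -{2}(subnK hba) exprD -mulrA -exprD addnn -muln2 exprM.
by rewrite -exprM mulnC exprM sqrrN !expr1n mulr1.
Qed.

Section Count.
Variable T : finType.
Lemma sum_small (D : {set T}) :
  \sum_(X : {set T} | (X \subset D) && (#|X| <= 3)%N) (-1)^+#|X| = sigma #|D|.
Proof.
rewrite (partition_big (fun X : {set T} => (inord #|X| : 'I_4)) xpredT) //=.
rewrite /sigma; apply: eq_bigr => t _.
rewrite (eq_bigl (fun X : {set T} => X \in [set X : {set T} | X \subset D & #|X| == t])); last first.
  move=> X; rewrite inE; case: (X \subset D) => //=.
  apply/andP/eqP => [[h3 /eqP <-]|ht]; first by rewrite inordK.
  split; first by rewrite ht -ltnS ltn_ord.
  by apply/eqP/val_inj; rewrite /= inordK ht // ltn_ord.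
rewrite (eq_bigr (fun _ => (-1)^+t)); last by move=> X; rewrite inE => /andP[_ /eqP ->].
by rewrite sumr_const cards_draws.
Qed.
End Count.

Section Code.
Variable F : finFieldType.
Local Notation I := (option F).

Definition synd (u : word F) : {ffun 'I_4 -> F} :=
  [ffun k => \sum_(i : I) pcol i k * u i].
Definition supp (u : word F) : {set I} := [set i | u i != 0].

Lemma in_supp u i : (i \in supp u) = (u i != 0). Proof. by rewrite inE. Qed.

Lemma hwtE u : hwt u = #|supp u|. Proof. by []. Qed.

Lemma syndB u w : synd (u - w) = synd u - synd w.
Proof.
apply/ffunP => k; rewrite !ffunE -sumrB; apply: eq_bigr => i _.
by rewrite !ffunE mulrBr.
Qed.

Lemma synd0 : synd 0 = 0.
Proof. by apply/ffunP => k; rewrite !ffunE big1 // => i _; rewrite ffunE mulr0. Qed.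

Lemma in_codeC c : (c \in codeC F) = (synd c == 0).
Proof.
rewrite inE; apply/forallP/eqP => [H|H].
  by apply/ffunP => k; rewrite !ffunE; apply/eqP/H.
by move=> k; move/ffunP: H => /(_ k); rewrite !ffunE => ->.
Qed.

Lemma in_coset v u : (u \in coset v) = (synd u == synd v).
Proof. by rewrite inE in_codeC syndB subr_eq0. Qed.

Lemma supp0 : supp 0 = set0.
Proof. by apply/setP => i; rewrite !inE ffunE eqxx. Qed.

Lemma suppB u w : supp (u - w) \subset supp u :|: supp w.
Proof.
apply/subsetP => i; rewrite in_setU !in_supp !ffunE.
case: (u i =P 0) => [->|//]; case: (w i =P 0) => [->|//].
by rewrite subrr eqxx.
Qed.

Lemma indep u : (#|supp u| <= 4)%N -> synd u = 0 -> u = 0.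
Proof.
move=> hc hs.
have hsome : forall t0, u (Some t0) = 0.
  move=> t0; case: (u (Some t0) =P 0) => // hnz; exfalso.
  pose Q := [pred t : F | (Some t \in supp u) && (t != t0)].
  pose p := \prod_(t <- enum Q) ('X - t%:P).
  have hsz : size p = (#|Q|).+1 by rewrite size_prod_XsubC cardE.
  pose A := [set Some t | t in Q].
  have hA : #|A| = #|Q| by rewrite card_imset //; apply: Some_inj.
  have nA0 : Some t0 \notin A.
    by apply/imsetP => -[t]; rewrite inE => /andP[_ ht] [] /eqP; rewrite eq_sym (negPf ht).
  have nAN : None \notin A by apply/imsetP => -[].
  have sA : Some t0 |: A \subset supp u.
    apply/subsetP => i; rewrite !inE => /orP[/eqP->|/imsetP[t]]; first by apply/eqP.
    by rewrite inE => /andP[]; rewrite inE => h _ ->.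
  have hQ3 : (#|Q| <= 3)%N.
    have := subset_leq_card sA; rewrite cardsU1 nA0 hA /= add1n => h2; exact: leq_trans h2 hc.
  have hQ2 : None \in supp u -> (#|Q| <= 2)%N.
    move=> hN; have sA' : None |: (Some t0 |: A) \subset supp u.
      by apply/subsetP => i; rewrite in_setU1 => /orP[/eqP->//|]; apply/subsetP.
    have := subset_leq_card sA'; rewrite cardsU1 cardsU1 nA0 hA in_setU1 /= (negPf nAN) /=.
    rewrite !add1n => h2; by have := leq_trans h2 hc; rewrite !ltnS.
  have hp0 : p.[t0] != 0.
    by rewrite -/(root p t0) root_prod_XsubC mem_enum inE eqxx andbF.
  have key : \sum_(k < 4) p`_k * synd u k = u (Some t0) * p.[t0].
    under eq_bigr => k _ do rewrite ffunE big_distrr.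
    rewrite exchange_big /= (bigD1 (Some t0)) //= [X in _ + X]big1 ?addr0.
      rewrite (horner_coef_wide _ (_ : size p <= 4)%N); last by rewrite hsz.
      by rewrite mulr_sumr; apply: eq_bigr => k _ /=; ring.
    move=> [t|] ht.
      case: (u (Some t) =P 0) => [->|hut]; first by apply: big1 => k _; rewrite !mulr0.
      have : root p t.
        by rewrite root_prod_XsubC mem_enum inE /= inE; apply/andP; split; [apply/eqP|].
      rewrite /root (horner_coef_wide _ (_ : size p <= 4)%N); last by rewrite hsz.
      move/eqP => h0; transitivity (u (Some t) * \sum_(k < 4) p`_k * t ^+ k).
        by rewrite mulr_sumr; apply: eq_bigr => k _ /=; ring.
      by rewrite h0 mulr0.
    case: (u None =P 0) => [->|hun]; first by apply: big1 => k _; rewrite !mulr0.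
    have hN : None \in supp u by rewrite inE; apply/eqP.
    have hp3 : p`_3 = 0 by apply: nth_default; rewrite hsz; exact: hQ2 hN.
    rewrite !big_ord_recr big_ord0 /= hp3; ring.
  move: key; rewrite hs.
  under eq_bigr => k _ do rewrite ffunE mulr0.
  rewrite big1 // => /esym /eqP; rewrite mulf_eq0 (negPf hp0) orbF => /eqP.
  exact: hnz.
apply/ffunP => -[t|]; rewrite ffunE; first exact: hsome.
move/ffunP: hs => /(_ (inord 3)); rewrite !ffunE.
rewrite (bigD1 None) //= big1 ?addr0; last first.
  by move=> [t|] // _; rewrite hsome mulr0.
by rewrite inordK // eqxx mul1r.
Qed.

Lemma syndD u w : synd (u + w) = synd u + synd w.
Proof.
apply/ffunP => k; rewrite !ffunE -big_split; apply: eq_bigr => i _.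
by rewrite !ffunE mulrDr.
Qed.

Lemma span (T : {set I}) (s : {ffun 'I_4 -> F}) :
  (4 <= #|T|)%N -> exists u, supp u \subset T /\ synd u = s.
Proof.
move=> h4.
pose e (k : 'I_4) : I := enum_val (widen_ord h4 k).
have einj : injective e.
  by move=> k1 k2 /enum_val_inj /(congr1 val) /= /val_inj.
have eT k : e k \in T by exact: enum_valP.
pose wo (x : {ffun 'I_4 -> F}) : word F :=
  [ffun i => \sum_(k < 4) (e k == i)%:R * x k].
have woB x y : wo x - wo y = wo (x - y).
  apply/ffunP => i; rewrite !ffunE -sumrB; apply: eq_bigr => k _.
  by rewrite !ffunE mulrBr.
have woe x k : wo x (e k) = x k.
  rewrite ffunE (bigD1 k) //= eqxx mul1r big1 ?addr0 // => k' hk.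
  by rewrite (inj_eq einj) (negPf hk) mul0r.
have suppwo x : supp (wo x) \subset [set e k | k in 'I_4].
  apply/subsetP => i; rewrite in_supp; apply: contraNT => hi.
  rewrite ?negbK ffunE big1 // => k _.
  case: (e k =P i) => [hk|]; last by rewrite mul0r.
  by move: hi; rewrite -hk imset_f.
have suppwoT x : supp (wo x) \subset T.
  apply: subset_trans (suppwo x) _; apply/subsetP => i /imsetP[k _ ->]; exact: eT.
pose phi x := synd (wo x).
have phiinj : injective phi.
  move=> x y hxy.
  have h0 : wo (x - y) = 0.
    apply: indep; last by rewrite -woB syndB /phi in hxy *; rewrite hxy subrr.
    apply: leq_trans (subset_leq_card (suppwo _)) _.
    by apply: leq_trans (leq_imset_card _ _) _; rewrite card_ord.
  apply/ffunP => k; move/ffunP: h0 => /(_ (e k)); rewrite woe !ffunE.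
  by move/eqP; rewrite subr_eq0 => /eqP.
case: (injF_bij phiinj) => g phig gphi.
by exists (wo (g s)); split; [exact: suppwoT | exact: gphi].
Qed.

Definition Nz (s : {ffun 'I_4 -> F}) (T : {set I}) : int :=
  \sum_(u : word F | (supp u \subset T) && (synd u == s)) 1.
Definition Ez (s : {ffun 'I_4 -> F}) (S : {set I}) : int :=
  \sum_(u : word F | (supp u == S) && (synd u == s)) 1.

Lemma N_E s T : Nz s T = \sum_(S : {set I} | S \subset T) Ez s S.
Proof.
rewrite /Nz (partition_big supp (fun S : {set I} => S \subset T)) /=; last by move=> u /andP[].
apply: eq_bigr => S hS; apply: eq_bigl => u.
by case: (supp u =P S) => [->|]; rewrite ?hS ?andbF ?andbT.
Qed.

Lemma N_trans s (T : {set I}) : (4 <= #|T|)%N -> Nz s T = Nz 0 T.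
Proof.
move=> h4; have [u1 [hu1 hs1]] := span s h4.
rewrite /Nz (reindex_inj (addIr u1)) /=; apply: eq_bigl => u.
rewrite syndD hs1 -[X in _ + _ == X]add0r (inj_eq (addIr s)); congr andb.
apply/idP/idP => h.
  apply: subset_trans (_ : supp (u + u1 - u1) \subset T); first by rewrite addrK.
  apply: subset_trans (suppB _ _) _; apply/subsetP => i /setUP[]; apply/subsetP => //.
apply: subset_trans (_ : supp (u - - u1) \subset T); first by rewrite opprK.
apply: subset_trans (suppB _ _) _; apply/subsetP => i /setUP[]; first by apply/subsetP.
by rewrite /supp; under eq_finset => x do rewrite ffunE oppr_eq0; apply/subsetP.
Qed.

Lemma N0_small (T : {set I}) : (#|T| <= 4)%N -> Nz 0 T = 1.
Proof.
move=> h4; rewrite /Nz (eq_bigl (fun u => u == 0)) ?big_pred1_eq // => u.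
apply/andP/eqP => [[hT /eqP h0]|->]; last by rewrite supp0 sub0set synd0.
by apply: indep => //; apply: leq_trans (subset_leq_card hT) h4.
Qed.

Lemma N_small s (T : {set I}) u0 j : synd u0 = s -> supp u0 = [set j] -> (#|T| <= 3)%N ->
  Nz s T = (j \in T)%:R.
Proof.
move=> hs hj h3.
rewrite /Nz (eq_bigl (fun u => (u == u0) && (j \in T))); last first.
  move=> u; apply/andP/andP => [[hT /eqP hu]|[/eqP -> hjT]].
    have e : u = u0.
      apply: subr0_eq; apply: indep; last by rewrite syndB hu hs subrr.
      apply: leq_trans (subset_leq_card (suppB _ _)) _.
      apply: leq_trans (leq_card_setU _ _) _; rewrite hj cards1 addn1.
      by rewrite ltnS; exact: leq_trans (subset_leq_card hT) h3.
    split; first by apply/eqP.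
    by move: hT; rewrite e hj sub1set.
  by rewrite hj sub1set hjT hs.
case: (boolP (j \in T)) => hjT.
  by rewrite (eq_bigl (fun u => u == u0)) ?big_pred1_eq // => u; rewrite andbT.
by rewrite big_pred0 // => u; rewrite andbF.
Qed.


Lemma B_sum (s : {ffun 'I_4 -> F}) w :
  (#|[set u : word F | (synd u == s) && (hwt u == w)]|%:Z)
   = \sum_(S : {set I} | #|S| == w) Ez s S.
Proof.
rewrite -natz -sumr_const (partition_big supp (fun S : {set I} => #|S| == w)) /=; last first.
  by move=> u; rewrite inE => /andP[_].
apply: eq_bigr => S /eqP hS; apply: eq_bigl => u; rewrite inE hwtE.
by case: (supp u =P S) => [->|]; rewrite ?hS ?eqxx ?andbT ?andbF.
Qed.

Section Diff.
Variables (s : {ffun 'I_4 -> F}) (u0 : word F) (j : I).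
Hypotheses (hs0 : synd u0 = s) (hj : supp u0 = [set j]).

Lemma g_val (T : {set I}) : Nz s T - Nz 0 T = - ((#|T| <= 3)%N && (j \notin T))%:R.
Proof.
case: (leqP #|T| 3) => h.
  rewrite (N_small hs0 hj h) N0_small ?(leq_trans h) //.
  by case: (j \in T); rewrite /= ?subrr ?oppr0 ?sub0r.
by rewrite N_trans // subrr /= oppr0.
Qed.

Lemma Delta (S : {set I}) : Ez s S - Ez 0 S = - ((-1)^+#|S| * sigma #|S :\ j|).
Proof.
rewrite -(mobius (fun R => Ez s R - Ez 0 R)).
rewrite (eq_bigr (fun X : {set I} => - (if (#|X| <= 3)%N && (j \notin X)
                       then (-1)^+(#|S| - #|X|) else 0))); last first.
  move=> X _; rewrite sumrB -!N_E g_val; case: ifP => _; rewrite ?mulr0 ?oppr0 //.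
  by rewrite mulrN1.
rewrite sumrN -big_mkcondr; congr (- _).
rewrite (eq_bigl (fun X : {set I} => (X \subset S :\ j) && (#|X| <= 3)%N)); last first.
  by move=> X; rewrite subsetD1; case: (X \subset S); case: (j \in X); case: (#|X| <= 3)%N.
rewrite (eq_bigr (fun X : {set I} => (-1)^+#|S| * (-1)^+#|X|)); last first.
  move=> X /andP[hX _]; rewrite sgn_sub // subset_leq_card //.
  exact: subset_trans hX (subD1set S j).
by rewrite -mulr_sumr sum_small.
Qed.

Lemma diff_formula (q w : nat) : #|F| = q -> (2 <= w)%N ->
  (#|[set u : word F | (synd u == s) && (hwt u == w)]|%:Z)
  - (#|[set u : word F | (synd u == 0) && (hwt u == w)]|%:Z)
  = (-1) ^+ w * (('C(q.+1, w) * 'C(w.-1, 3))%:Z - ('C(q, w.-1) * 'C(w - 2, 2))%:Z).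
Proof.
move=> hq hw.
rewrite !B_sum -sumrB.
under eq_bigr => S _ do rewrite Delta.
rewrite (bigID (fun S : {set I} => j \in S)) /=.
rewrite (eq_bigr (fun _ => - ((-1)^+w * sigma w.-1))); last first.
  move=> S /andP[/eqP hw' hjS]; rewrite hw'; congr (- (_ * sigma _)).
  by move: hw'; rewrite (cardsD1 j S) hjS add1n => <-.
rewrite [X in _ + X](eq_bigr (fun _ => - ((-1)^+w * sigma w))); last first.
  move=> S /andP[/eqP hw' hjS]; rewrite hw'; congr (- (_ * sigma _)).
  by move: hw'; rewrite (cardsD1 j S) (negPf hjS) add0n => <-.
rewrite !sumr_const.
set Nin := #|_|; set Nout := #|_|.
have hout : Nout = 'C(q, w).
  have hc : #|[set~ j]| = q by rewrite cardsC1 card_option hq.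
  rewrite /Nout -hc -cards_draws; apply: eq_card => S.
  rewrite !inE /=; apply/andP/andP => -[h1 h2]; split => //.
    apply/subsetP => i hi; rewrite !inE; apply: contraNneq h2 => <-; done.
  by apply/negP => hjS; move: (subsetP h1 _ hjS); rewrite !inE eqxx.
have hall : (Nin + Nout = 'C(q.+1, w))%N.
  have hc : #|{: I}| = q.+1 by rewrite card_option hq.
  rewrite -hc -card_draws -(cardID [pred S : {set I} | j \in S]).
  rewrite /Nin /Nout; congr (_ + _)%N; apply: eq_card => S; rewrite !inE /= unfold_in; [by [] | by rewrite andbC].
clearbody Nin Nout; case: w hw hall hout => [|[|m]] // _ hall hout.
rewrite !sigmaS /= subn2 /=.
have e1 : 'C(q.+1, m.+2) = ('C(q, m.+2) + 'C(q, m.+1))%N by rewrite binS.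
have e2 : 'C(m.+1, 3) = ('C(m, 3) + 'C(m, 2))%N by rewrite binS.
have hin : Nin = 'C(q, m.+1) by move: hall; rewrite hout e1; lia.
rewrite hin hout e1 e2.
rewrite !PoszM !PoszD; ring.
Qed.
End Diff.

End Code.

Unset Implicit Arguments.

Theorem theorem4p2 (F : finFieldType) (q : nat) (hq : #|F| = q) (hq5 : (5 <= q)%N)
  (v : word F) (hv : set_weight (coset v) = 1%N) :
  [/\ Bw (coset v) 0 = 0%N /\ Bw (coset v) 2 = 0%N /\ Bw (coset v) 3 = 0%N,
      Bw (coset v) 1 = 1%N, Bw (coset v) 4 = 'C(q, 4) &
      forall w : nat, (5 <= w)%N ->
        (Bw (coset v) w)%:Z =
          (Aw F w)%:Z + (-1) ^+ w *
            (('C(q.+1, w) * 'C(w.-1, 3))%:Z - ('C(q, w.-1) * 'C(w - 2, 2))%:Z)].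
Proof.
have hBw w : Bw (coset v) w = #|[set u : word F | (synd u == synd v) && (hwt u == w)]|.
  by apply: eq_card => u; rewrite [in RHS]inE [in LHS]in_set -in_coset.
have hAw w : Aw F w = #|[set u : word F | (synd u == 0) && (hwt u == w)]|.
  by apply: eq_card => u; rewrite [in RHS]inE [in LHS]in_set -in_codeC.
have [u0 hu0V hu0w] : exists2 u0, u0 \in coset v & hwt u0 = 1%N.
  pose K := fun y => y = #|{: option F}| \/ exists2 u, u \in coset v & hwt u = y.
  have : K (\big[minn/#|{: option F}|]_(u in coset v) hwt u).
    apply: big_ind; first by left.
      by move=> x y hx hy; case: (leqP x y).
    by move=> u hu; right; exists u.
  rewrite /set_weight in hv; rewrite hv => -[|//].
  by rewrite card_option hq => -[h]; move: hq5; rewrite -h.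
have hs0 : synd u0 = synd v by move: hu0V; rewrite in_coset => /eqP.
have [j hj] : exists j, supp u0 = [set j] by apply/cards1P; rewrite -hwtE hu0w.
have uniq0 u : synd u = synd v -> (hwt u <= 3)%N -> u = u0.
  move=> hu h3; apply: subr0_eq; apply: indep; last by rewrite syndB hu hs0 subrr.
  apply: leq_trans (subset_leq_card (suppB _ _)) _.
  apply: leq_trans (leq_card_setU _ _) _.
  by rewrite hj cards1 addn1 ltnS -hwtE.
have A0 w : (1 <= w)%N -> (w <= 4)%N -> Aw F w = 0%N.
  move=> hw1 hw4; rewrite hAw; apply/eqP; rewrite cards_eq0; apply/eqP/setP => u.
  rewrite !inE; apply/negbTE/negP => /andP[/eqP hu /eqP hw'].
  have e : u = 0 by apply: indep => //; rewrite -hwtE hw'.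
  by move: hw'; rewrite e hwtE supp0 cards0 => hw0; move: hw1; rewrite -hw0.
have D w (hw : (2 <= w)%N) := @diff_formula F (synd v) u0 j hs0 hj q w hq hw.
have Dsmall w : (2 <= w)%N -> (w <= 4)%N ->
    (Bw (coset v) w)%:Z = (-1) ^+ w *
            (('C(q.+1, w) * 'C(w.-1, 3))%:Z - ('C(q, w.-1) * 'C(w - 2, 2))%:Z).
  move=> hw2 hw4; have := D w hw2.
  by rewrite -hBw -hAw A0 // ?(leq_trans _ hw2) // subr0.
split.
- split; last split.
  + rewrite hBw; apply/eqP; rewrite cards_eq0; apply/eqP/setP => u.
    rewrite !inE; apply/negbTE/negP => /andP[/eqP hu /eqP hw'].
    have e : u = u0 by apply: uniq0; rewrite ?hw'.
    by move: hw'; rewrite e hu0w.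
  + have := Dsmall 2%N isT isT => /=.
    have -> : 'C(1,3) = 0%N by []. have -> : 'C(2 - 2, 2) = 0%N by [].
    by rewrite !muln0 subrr mulr0 => h; apply/eqP; rewrite -eqz_nat h.
  + have := Dsmall 3%N isT isT => /=.
    have -> : 'C(2,3) = 0%N by []. have -> : 'C(3 - 2, 2) = 0%N by [].
    by rewrite !muln0 subrr mulr0 => h; apply/eqP; rewrite -eqz_nat h.
- rewrite hBw; apply/eqP/cards1P; exists u0; apply/setP => u; rewrite !inE.
  apply/andP/eqP => [[/eqP h1 /eqP h2]|->]; last by rewrite hs0 hu0w !eqxx.
  by apply: uniq0; rewrite ?h2.
- have := Dsmall 4%N isT isT; rewrite /= (binS q 3).
  have -> : 'C(3,3) = 1%N by []. have -> : 'C(4 - 2, 2) = 1%N by [].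
  have -> : (-1)^+4 = 1 :> int by [].
  by rewrite mul1r !muln1 PoszD addrK => h; apply/eqP; rewrite -eqz_nat h.
- move=> w hw; have := D w (leq_trans (isT : (2 <= 5)%N) hw) => /eqP.
  by rewrite -hBw -hAw subr_eq addrC => /eqP.
Qed.
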